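(* Let $n\ge1$ and $k\ge0$ be integers and $a,b,c\in\mathbb{C}$ such that $c+k,\ a+b+1-n-c,\ c-a,\ b-c-k-n+1\notin\{0,-1,-2,\dots\}$. Then $${}_3F_2\!\left(\left.\begin{array}{c}-n,\ a,\ b\\ c+k,\ a+b+1-n-c\end{array}\right|1\right)=\frac{(c-a)_n\,(c-b+k)_n}{(c+k)_n\,(c-a-b)_n}\;{}_3F_2\!\left(\left.\begin{array}{c}-k,\ -n,\ b\\ c-a,\ b-c-k-n+1\end{array}\right|1\right).$$ (For $k=0$ this is the Pfaff–Saalschütz formula.)
   Context: ${}_3F_2(a_1,a_2,a_3;b_1,b_2;1)=\sum_{m\ge0}\frac{(a_1)_m(a_2)_m(a_3)_m}{m!\,(b_1)_m(b_2)_m}$ with $(\alpha)_m=\Gamma(\alpha+m)/\Gamma(\alpha)$; both series here terminate (upper parameters $-n$, resp. $-k,-n$). *)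

(* Defs.v *)
From HB Require Import structures.
From mathcomp Require Import all_boot all_order all_algebra.
Set Implicit Arguments. Unset Strict Implicit. Unset Printing Implicit Defensive.
Import Order.TTheory GRing.Theory Num.Theory.
Local Open Scope ring_scope.

Definition poch (R : nzRingType) (x : R) (m : nat) : R :=
  \prod_(i < m) (x + i%:R).

(* Terminating 3F2 at argument 1: the series sum_{m>=0}, truncated after
   m = N; used only when some upper parameter is -N' with N' <= N, so that all
   terms with m > N vanish and this is the full (terminating) series. *)
Definition F32 (R : fieldType) (N : nat) (a1 a2 a3 b1 b2 : R) : R :=
  \sum_(m < N.+1)
    (poch a1 m * poch a2 m * poch a3 m) / (m`!%:R * poch b1 m * poch b2 m).

Definition not_nonpos_int (R : nzRingType) (x : R) : Prop :=
  forall j : nat, x != - (j%:R).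

(* Main.v *)
Require Import Defs.
From HB Require Import structures.
From mathcomp Require Import all_boot all_order all_algebra.
From mathcomp Require Import ring.
Import Order.TTheory GRing.Theory Num.Theory.
Local Open Scope ring_scope.

Section Poch.
Variable R : numFieldType.
Implicit Types x y z : R.
Local Notation P := (@poch R).

Lemma poch0 x : P x 0 = 1. Proof. by rewrite /poch big_ord0. Qed.
Lemma pochS x m : P x m.+1 = P x m * (x + m%:R). Proof. by rewrite /poch big_ord_recr. Qed.
Lemma poch1 x : P x 1 = x. Proof. by rewrite pochS poch0 mul1r addr0. Qed.
Lemma pochD x m t : P x (m + t) = P x m * P (x + m%:R) t.
Proof.
elim: t => [|t IH]; first by rewrite addn0 poch0 mulr1.
by rewrite addnS !pochS IH -mulrA natrD addrA.
Qed.

Lemma poch_refl x N : P (1 - x - N%:R) N = (-1)^+N * P x N.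
Proof.
elim: N => [|N IH]; first by rewrite !poch0 expr0 mulr1.
rewrite -add1n pochD poch1.
have -> : 1 - x - (1 + N)%N%:R + 1%:R = 1 - x - N%:R by rewrite natrD; ring.
rewrite IH natrD add1n pochS exprS; ring.
Qed.

Lemma fact_poch t j : ((t + j)`!)%:R = (t`!)%:R * P (t.+1)%:R j :> R.
Proof.
elim: j => [|j IH]; first by rewrite addn0 poch0 mulr1.
rewrite addnS factS natrM IH pochS -addSn natrD; ring.
Qed.

Lemma poch_negnat_eq0 m j : (m < j)%N -> P (- m%:R) j = 0.
Proof. move=> H; apply/eqP/prodf_eq0; exists (Ordinal H) => //=; by rewrite addNr. Qed.

Lemma poch_neq0 x m : not_nonpos_int x -> P x m != 0.
Proof. move=> H; apply/prodf_neq0 => i _; rewrite addr_eq0; exact: H. Qed.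

Lemma fact_neq0 m : (m`!)%:R != 0 :> R.
Proof. by rewrite pnatr_eq0 -lt0n fact_gt0. Qed.

Lemma poch_split_neq0 y j n : (j <= n)%N -> P y n != 0 -> P y j != 0 /\ P (y + j%:R) (n - j) != 0.
Proof. by move=> H; rewrite -{1}(subnKC H) pochD mulf_eq0 negb_or => /andP[]. Qed.

Lemma pochDn x z N : P (x + z) N = \sum_(t < N.+1) P x t * P z (N - t) *+ 'C(N, t).
Proof.
elim: N => [|N IH]; first by rewrite big_ord1 !poch0 mulr1 bin0.
rewrite pochS IH mulr_suml.
have E : forall t : 'I_N.+1, P x t * P z (N - t) *+ 'C(N,t) * (x + z + N%:R)
   = P x t.+1 * P z (N - t) *+ 'C(N,t) + P x t * P z (N.+1 - t) *+ 'C(N,t).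
  move=> t; rewrite subSn ?(leq_ord t) // !pochS natrB ?(leq_ord t) //.
  by rewrite mulrnAl -mulrnDl; congr (_ *+ _); ring.
rewrite (eq_bigr _ (fun t _ => E t)) big_split /=.
rewrite [in RHS]big_ord_recl bin0 subn0 poch0 mul1r.
under [in RHS]eq_bigr => t _ do rewrite binS mulrnDr subSS.
rewrite big_split /= [X in _ = _ + X]addrC addrCA; congr (_ + _).
rewrite big_ord_recl bin0 subn0 poch0 !mul1r; congr (_ + _).
rewrite big_ord_recr /= bin_small // mulr0n addr0.
by apply: eq_bigr => t _; rewrite subSS /bump leq0n add1n.
Qed.
Lemma negpoch N t : (t <= N)%N ->
  P (- N%:R) t * ((N - t)`!)%:R = (-1)^+t * (N`!)%:R.
Proof.
move=> Ht; have h := poch_refl ((N - t).+1%:R) t.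
have e : 1 - (N - t).+1%:R - t%:R = - N%:R :> R.
  by rewrite -addn1 natrD natrB //; ring.
rewrite e in h; by rewrite h -mulrA [P _ t * _]mulrC -fact_poch subnK.
Qed.

Lemma vand_term x y N (t : 'I_N.+1) : P y N != 0 ->
  P x t * P (1 - y - N%:R) (N - t) *+ 'C(N, t)
  = (-1)^+N * P y N * (P (- N%:R) t * P x t / ((t`!)%:R * P y t)).
Proof.
move=> Hy; have Ht : (t <= N)%N := leq_ord t.
have h1 : P (1 - y - N%:R) (N - t) = (-1)^+(N - t) * P (y + t%:R) (N - t).
  rewrite -poch_refl; congr P; rewrite natrB //; ring.
have h2 : P y N = P y t * P (y + t%:R) (N - t) by rewrite -pochD subnKC.
have h5 : (-1)^+N = (-1)^+(N - t) * (-1)^+t :> R by rewrite -exprD subnK.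
have [Bn0 _] := poch_split_neq0 _ _ _ Ht Hy.
have f0 := fact_neq0 t; have g0 := fact_neq0 (N - t).
have h3 : P (- N%:R) t = (-1)^+t * ('C(N, t)%:R * (t`!)%:R).
  apply: (mulIf g0); rewrite negpoch // -!mulrA -!natrM bin_fact //.
have s22 : (-1)^+t * (-1)^+t = 1 :> R by rewrite -exprD -signr_odd addnn odd_double.
rewrite h1 h2 h5 h3 -mulr_natr.
set s1 := (-1)^+(N - t); set s2 := (-1)^+t; set A := P (y + t%:R) (N - t).
transitivity (s1 * (s2 * s2) * A * 'C(N, t)%:R * P x t).
  by rewrite s22 mulr1; ring.
field; by rewrite Bn0 f0.
Qed.
Lemma vand x y N : P y N != 0 ->
  \sum_(t < N.+1) P (- N%:R) t * P x t / ((t`!)%:R * P y t) = P (y - x) N / P y N.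
Proof.
move=> Hy.
have H := pochDn x (1 - y - N%:R) N.
have e : x + (1 - y - N%:R) = 1 - (y - x) - N%:R by ring.
rewrite e poch_refl (eq_bigr _ (fun t _ => vand_term x y N t Hy)) -mulr_sumr -mulrA in H.
have sN : (-1)^+N != 0 :> R by rewrite signr_eq0.
have H' := mulfI sN H.
by rewrite H'; field.
Qed.
Lemma vand_ext x y m n : (m <= n)%N -> P y m != 0 ->
  \sum_(i < n.+1) P (- m%:R) i * P x i / ((i`!)%:R * P y i) = P (y - x) m / P y m.
Proof.
move=> Hmn Hy.
rewrite (bigID (fun i : 'I_n.+1 => (i < m.+1)%N)) /= [X in _ + X]big1 ?addr0; last first.
  by move=> i; rewrite -leqNgt => Hi; rewrite poch_negnat_eq0 // !mul0r.
rewrite -(big_ord_widen (n1:=m.+1) n.+1 (fun i => P (- m%:R) i * P x i / ((i`!)%:R * P y i))) //.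
exact: vand.
Qed.

Lemma poch_neq0_le y j n : (j <= n)%N -> P y n != 0 -> P y j != 0.
Proof. by move=> H1 H2; case: (poch_split_neq0 _ _ _ H1 H2). Qed.

Lemma vand2 x y n j : (j <= n)%N -> P y n != 0 ->
  \sum_(m < n.+1) P (- n%:R) m * P x m * P (- m%:R) j / ((m`!)%:R * P y m)
  = (-1)^+j * P (- n%:R) j * P x j * P (y - x) (n - j) / P y n.
Proof.
move=> Hj Hy.
rewrite -(big_mkord xpredT (fun m => P (- n%:R) m * P x m * P (- m%:R) j / ((m`!)%:R * P y m))).
rewrite (big_cat_nat (n:=j) (leq0n j)) ?(leqW Hj) //=.
rewrite big_nat_cond big1 ?add0r; last first.
  by move=> i /andP[/andP[_ Hi] _]; rewrite (poch_negnat_eq0 _ _ Hi) mulr0 mul0r.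
rewrite -{1}(add0n j) big_addn subSn // big_mkord.
have [Hyj Hyj'] := poch_split_neq0 _ _ _ Hj Hy.
have K : forall t : 'I_(n - j).+1,
  P (- n%:R) (t + j) * P x (t + j) * P (- (t + j)%:R) j / (((t + j)`!)%:R * P y (t + j))
  = ((-1)^+j * P (- n%:R) j * P x j / P y j) *
    (P (- (n - j)%:R) t * P (x + j%:R) t / ((t`!)%:R * P (y + j%:R) t)).
  move=> t.
  have Ht : (t + j <= n)%N by rewrite addnC -leq_subRL // -ltnS.
  have hneg := negpoch (t + j) j (leq_addl _ _); rewrite addnK in hneg.
  have h : P (- (t + j)%:R) j = (-1)^+j * ((t + j)`!)%:R / (t`!)%:R.
    by apply: (mulIf (fact_neq0 t)); rewrite hneg mulfVK // fact_neq0.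
  have Hyt := poch_neq0_le _ _ _ Ht Hy.
  rewrite h (addnC t j) !pochD in Hyt *.
  have e : - n%:R + j%:R = - (n - j)%:R :> R by rewrite natrB //; ring.
  rewrite e.
  move: Hyt; rewrite mulf_eq0 negb_or => /andP[_ Hyt].
  field.
  by rewrite Hyt Hyj !fact_neq0.
rewrite (eq_bigr _ (fun t _ => K t)) -mulr_sumr vand //.
have e2 : y + j%:R - (x + j%:R) = y - x by ring.
have hP : P y n = P y j * P (y + j%:R) (n - j) by rewrite -pochD subnKC.
rewrite e2 hP.
field.
by rewrite Hyj Hyj'.
Qed.
End Poch.

Arguments poch_neq0 {R}. Arguments fact_neq0 {R}. Arguments vand_ext {R}.
Arguments vand2 {R}. Arguments poch_refl {R}. Arguments pochD {R}.

Theorem mainTheorem9 (C : numClosedFieldType) (n k : nat) (a b c : C) :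
  (1 <= n)%N ->
  not_nonpos_int (c + k%:R) ->
  not_nonpos_int (a + b + 1 - n%:R - c) ->
  not_nonpos_int (c - a) ->
  not_nonpos_int (b - c - k%:R - n%:R + 1) ->
  F32 n (- n%:R) a b (c + k%:R) (a + b + 1 - n%:R - c)
  = (poch (c - a) n * poch (c - b + k%:R) n) / (poch (c + k%:R) n * poch (c - a - b) n)
    * F32 n (- k%:R) (- n%:R) b (c - a) (b - c - k%:R - n%:R + 1).
Proof.
move=> Hn Hd He Ha Hb.
have nd := fun m => poch_neq0 _ m Hd.
have ne := fun m => poch_neq0 _ m He.
have na := fun m => poch_neq0 _ m Ha.
have nb := fun m => poch_neq0 _ m Hb.
have nf := fun m => @fact_neq0 C m.
pose S := \sum_(m < n.+1) poch (- n%:R) m * poch b m * poch (c + k%:R - a) m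
            / ((m`!)%:R * poch (c + k%:R) m * poch (c - a) m).
have Claim1 : S = (-1)^+n * poch (a + b + 1 - n%:R - c) n / poch (c - a) n
                 * F32 n (- n%:R) a b (c + k%:R) (a + b + 1 - n%:R - c).
  rewrite /S /F32 mulr_sumr.
  transitivity (\sum_(m < n.+1) \sum_(i < n.+1)
     (poch (- n%:R) m * poch b m / ((m`!)%:R * poch (c - a) m)) *
     (poch (- m%:R) i * poch a i / ((i`!)%:R * poch (c + k%:R) i))).
    apply: eq_bigr => m _; rewrite -mulr_sumr vand_ext ?(leq_ord m) //.
    by field; rewrite !nd !na !nf.
  rewrite exchange_big /=; apply: eq_bigr => i _.
  transitivity (poch a i / ((i`!)%:R * poch (c + k%:R) i) *
     \sum_(m < n.+1) poch (- n%:R) m * poch b m * poch (- m%:R) i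
                     / ((m`!)%:R * poch (c - a) m)).
    by rewrite mulr_sumr; apply: eq_bigr => m _; field; rewrite !nd !na !nf.
  have Hi : (i <= n)%N := leq_ord i.
  rewrite vand2 //.
  have r1 : poch (c - a - b) (n - i)
      = (-1)^+(n - i) * poch (a + b + 1 - n%:R - c + i%:R) (n - i).
    by rewrite -poch_refl; congr (poch _ _); rewrite natrB //; ring.
  have r2 : poch (a + b + 1 - n%:R - c) n
      = poch (a + b + 1 - n%:R - c) i * poch (a + b + 1 - n%:R - c + i%:R) (n - i).
    by rewrite -pochD subnKC.
  have r3 : (-1)^+n = (-1)^+i * (-1)^+(n - i) :> C by rewrite -exprD subnKC.
  rewrite r1 r2 r3.
  by field; rewrite !na !nd !ne !nf.
have Claim2 : S = poch (c - b + k%:R) n / poch (c + k%:R) n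
                 * F32 n (- k%:R) (- n%:R) b (c - a) (b - c - k%:R - n%:R + 1).
  rewrite /S /F32 mulr_sumr.
  transitivity (\sum_(m < n.+1) \sum_(j < n.+1)
     (poch (- n%:R) m * poch b m / ((m`!)%:R * poch (c + k%:R) m)) *
     (poch (- m%:R) j * poch (- k%:R) j / ((j`!)%:R * poch (c - a) j))).
    apply: eq_bigr => m _; rewrite -mulr_sumr vand_ext ?(leq_ord m) //.
    have -> : c - a - - k%:R = c + k%:R - a by ring.
    by field; rewrite !nd !na !nf.
  rewrite exchange_big /=; apply: eq_bigr => j _.
  transitivity (poch (- k%:R) j / ((j`!)%:R * poch (c - a) j) *
     \sum_(m < n.+1) poch (- n%:R) m * poch b m * poch (- m%:R) j
                     / ((m`!)%:R * poch (c + k%:R) m)).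
    by rewrite mulr_sumr; apply: eq_bigr => m _; field; rewrite !nd !na !nf.
  have Hj : (j <= n)%N := leq_ord j.
  rewrite vand2 //.
  have q1 := poch_refl (b - c - k%:R - n%:R + 1) j.
  have q2 : poch (c + k%:R - b) n = poch (c + k%:R - b) (n - j)
      * poch (1 - (b - c - k%:R - n%:R + 1) - j%:R) j.
    rewrite -[in LHS](subnK Hj) pochD; congr (_ * poch _ _).
    by rewrite natrB //; ring.
  have q3 : c - b + k%:R = c + k%:R - b by ring.
  rewrite q3 q2 q1.
  by field; rewrite !na !nd !nb !nf.
have Hcab : poch (a + b + 1 - n%:R - c) n = (-1)^+n * poch (c - a - b) n.
  by rewrite -poch_refl; congr (poch _ _); ring.
have s2 : (-1)^+n * (-1)^+n = 1 :> C
  by rewrite -exprD -signr_odd addnn odd_double.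
have nab : poch (c - a - b) n != 0.
  by move: (ne n); rewrite Hcab mulf_eq0 negb_or => /andP[].
have E := etrans (esym Claim1) Claim2.
rewrite Hcab in E.
set L := F32 n _ _ _ _ _ in E *.
transitivity ((-1)^+n * ((-1)^+n * poch (c - a - b) n) / poch (c - a) n * L
              * (poch (c - a) n / poch (c - a - b) n)).
  rewrite [(-1)^+n * (_ * _)]mulrA s2 mul1r.
  by field; rewrite nab na.
rewrite E.
by field; rewrite nab nd.
Qed.
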